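(* Let $\Psi=\{|\psi_i\rangle\}$ be a family of multi-qubit states that is a universal resource under local projective measurements up to local unitary operations. Then, for any encoding $\{|\mathbf0\rangle,|\mathbf1\rangle\}$, the encoded version $\boldsymbol\Psi$ of the family is an encoded universal resource under LOCC up to logical local unitary operations.
   Context: $\Psi$ is a universal resource under local projective measurements up to local unitary operations if for every $n$ and every $n$-qubit state $|\phi\rangle$ there is $|\psi_i\rangle\in\Psi$ and a (possibly adaptive) sequence of single-qubit projective measurements on all but a fixed set of $n$ qubits of $|\psi_i\rangle$ such that in every branch the unmeasured $n$ qubits are in the state $(U_1\otimes\cdots\otimes U_n)|\phi\rangle$ for some single-qubit unitaries $U_k$ (depending on the branch). An encoding is a fixed pair of orthogonal $m$-qubit states $|\mathbf0\rangle,|\mathbf1\rangle$; the encoded version of an $N$-qubit state $\sum c_{i_1\dots i_N}|i_1\dots i_N\rangle$ is the $mN$-qubit state $\sum c_{i_1\dots i_N}|\mathbf i_1\rangle_{A_1}\cdots|\mathbf i_N\rangle_{A_N}$, where $A_k$ are disjoint blocks of $m$ qubits; $\boldsymbol\Psi$ consists of the encoded versions of the members of $\Psi$. For a one-qubit operator $U=\sum_{a,b}u_{ab}|a\rangle\langle b|$, its logical version is $\mathbf U=\sum_{a,b}u_{ab}|\mathbf a\rangle\langle\mathbf b|$ acting on a block. ''Encoded universal resource under LOCC up to logical local unitary operations'' means: for every $n$ and every $n$-qubit $|\phi\rangle$ there is a member of $\boldsymbol\Psi$ and an LOCC protocol (each physical qubit a separate party) which, exactly and with probability one, leaves a fixed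 set of $n$ blocks in the state $(\mathbf U_1\otimes\cdots\otimes\mathbf U_n)|\boldsymbol\phi\rangle$ for some logical single-qubit unitaries $\mathbf U_k$ (depending on the branch), $|\boldsymbol\phi\rangle$ being the encoded version of $|\phi\rangle$. *)

(* Defs.v *)
From HB Require Import structures.
From mathcomp Require Import all_boot all_order all_algebra.
From mathcomp Require Import sesquilinear spectral.
From mathcomp Require Export reals complex.

Set Implicit Arguments.
Unset Strict Implicit.
Unset Printing Implicit Defensive.

Import Order.TTheory GRing.Theory Num.Theory.
Local Open Scope ring_scope.
Local Open Scope sesquilinear_scope.

Section QuantumDefs.
Variable C : numClosedFieldType.

Definition config (Q : finType) := {ffun Q -> 'I_2}.

(* An (unnormalised) pure state vector of the qubits indexed by Q,
   i.e. an element of (C^2)^{\otimes Q}, given by its amplitudes. *)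
Definition qstate (Q : finType) := config Q -> C.

Definition normalized (Q : finType) (v : qstate Q) :=
  \sum_(x : config Q) `|v x| ^+ 2 = 1.

Definition nonzero (Q : finType) (v : qstate Q) := exists x, v x != 0.

Definition upd (Q : finType) (x : config Q) (q : Q) (b : 'I_2) : config Q :=
  [ffun p => if p == q then b else x p].

Definition apply1 (Q : finType) (q : Q) (A : 'M[C]_2) (v : qstate Q) : qstate Q :=
  fun x => \sum_(b < 2) A (x q) b * v (upd x q b).

(* Rank-one projector onto the j-th column of u (the j-th basis vector of the
   orthonormal measurement basis given by the unitary u). *)
Definition proj_col (u : 'M[C]_2) (j : 'I_2) : 'M[C]_2 :=
  \matrix_(a < 2, b < 2) (u a j * (u b j)^*).

(* (Possibly adaptive) sequences of single-qubit projective measurements: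
   a decision tree; at a node, qubit q is measured in the orthonormal basis
   formed by the columns of the unitary u, and the protocol continues
   according to the outcome. *)
Inductive ptree (Q : Type) :=
| PLeaf
| PMeas of Q & 'M[C]_2 & ('I_2 -> ptree Q).

(* "P holds in every branch": P receives the final (unnormalised)
   post-measurement state and the list of measured qubits of the branch. *)
Fixpoint pbranches (Q : finType) (t : ptree Q) (v : qstate Q) (meas : seq Q)
    (P : qstate Q -> seq Q -> Prop) : Prop :=
  match t with
  | PLeaf => P v meas
  | PMeas q u ch =>
      u \is unitarymx /\
      forall j : 'I_2, pbranches (ch j) (apply1 q (proj_col u j) v) (q :: meas) P
  end.

(* LOCC protocols in which every physical qubit is a separate party: a
   decision tree (classical communication = the whole history of outcomes
   determines the next step); at a node, party q applies a local instrument
   with Kraus operators K_0..K_{r-1} (sum_j K_j^dagger K_j = 1) on its qubit. *)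
Inductive ltree (Q : Type) :=
| LLeaf
| LOp (q : Q) (r : nat) (K : 'I_r -> 'M[C]_2) (ch : 'I_r -> ltree Q).

Fixpoint lbranches (Q : finType) (t : ltree Q) (v : qstate Q)
    (P : qstate Q -> Prop) : Prop :=
  match t with
  | LLeaf => P v
  | LOp q r K ch =>
      \sum_(j < r) ((K j)^t* *m K j) = 1%:M /\
      forall j : 'I_r, lbranches (ch j) (apply1 q (K j) v) P
  end.

(* The qubits emb(Qt) of the (nonzero) global state v are in the pure state w
   (up to normalisation/global phase): v = chi (x) w, chi living on the other
   qubits. *)
Definition holds_on (Q Qt : finType) (emb : Qt -> Q) (v : qstate Q)
    (w : qstate Qt) :=
  exists chi : qstate Q,
    (forall x x' : config Q,
        (forall q, (forall k, emb k != q) -> x q = x' q) -> chi x = chi x') /\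
    forall x : config Q, v x = chi x * w [ffun k => x (emb k)].

Definition tensor_apply (n : nat) (U : 'I_n -> 'M[C]_2) (phi : qstate 'I_n)
    : qstate 'I_n :=
  fun y => \sum_(y' : config 'I_n) (\prod_(k < n) U k (y k) (y' k)) * phi y'.

(* The qubits (blocks) indexed by 'I_N * 'I_m: qubit (k, j) is the j-th qubit
   of block A_k. *)
Definition block (N m : nat) (x : config ('I_N * 'I_m)%type) (k : 'I_N) : config 'I_m :=
  [ffun j => x (k, j)].

(* An encoding: a pair of orthonormal m-qubit states |0>, |1> = e 0, e 1. *)
Definition orthonormal_pair (m : nat) (e : 'I_2 -> qstate 'I_m) :=
  forall a b : 'I_2, \sum_(z : config 'I_m) (e a z)^* * e b z = (a == b)%:R.

Definition encode (m : nat) (e : 'I_2 -> qstate 'I_m) (N : nat)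
    (psi : qstate 'I_N) : qstate ('I_N * 'I_m)%type :=
  fun x => \sum_(c : config 'I_N) psi c * \prod_(k < N) e (c k) (block x k).

(* Logical version U = sum_{a,b} u_ab |e_a><e_b| of a one-qubit operator u,
   as a matrix on the m qubits of one block (entry (z, z')). *)
Definition logical_op (m : nat) (e : 'I_2 -> qstate 'I_m) (u : 'M[C]_2)
    (z z' : config 'I_m) : C :=
  \sum_(a < 2) \sum_(b < 2) u a b * e a z * (e b z')^*.

Definition logical_apply (m : nat) (e : 'I_2 -> qstate 'I_m) (n : nat)
    (U : 'I_n -> 'M[C]_2) (w : qstate ('I_n * 'I_m)%type) : qstate ('I_n * 'I_m)%type :=
  fun y => \sum_(y' : config ('I_n * 'I_m)%type)
             (\prod_(k < n) logical_op e (U k) (block y k) (block y' k)) * w y'.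

Definition universal_proj (I : Type) (N : I -> nat)
    (psi : forall i, qstate 'I_(N i)) :=
  forall (n : nat) (phi : qstate 'I_n), normalized phi ->
  exists (i : I) (e : 'I_n -> 'I_(N i)), injective e /\
  exists t : ptree 'I_(N i),
    pbranches t (psi i) [::] (fun v meas =>
      (forall q, q \in meas -> forall k, e k != q) /\
      (forall q, (forall k, e k != q) -> q \in meas) /\
      (* in every (occurring) branch the fixed qubits are in U_1..U_n |phi> *)
      (nonzero v -> exists U : 'I_n -> 'M[C]_2,
          (forall k, U k \is unitarymx) /\ holds_on e v (tensor_apply U phi))).

Definition enc_universal_locc (m : nat) (e : 'I_2 -> qstate 'I_m) (I : Type)
    (N : I -> nat) (psi : forall i, qstate 'I_(N i)) :=
  forall (n : nat) (phi : qstate 'I_n), normalized phi ->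
  exists (i : I) (f : 'I_n -> 'I_(N i)), injective f /\
  exists t : ltree ('I_(N i) * 'I_m)%type,
    lbranches t (encode e (psi i)) (fun v =>
      nonzero v -> exists U : 'I_n -> 'M[C]_2,
        (forall k, U k \is unitarymx) /\
        holds_on (fun p : 'I_n * 'I_m => (f p.1, p.2)) v
                 (logical_apply e U (encode e phi))).

End QuantumDefs.

(* Main.v *)
Require Import Defs.
From mathcomp Require Import all_boot all_order all_algebra.
From mathcomp Require Import reals complex.
From mathcomp Require Import sesquilinear spectral.
From Stdlib Require Import FunctionalExtensionality.
From mathcomp Require Import ring.

Set Implicit Arguments.
Unset Strict Implicit.
Unset Printing Implicit Defensive.
Import Order.TTheory GRing.Theory Num.Theory.
Local Open Scope ring_scope.
Local Open Scope sesquilinear_scope.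

Section Aux.
Variable C : numClosedFieldType.

Lemma updE (Q : finType) (x : config Q) q b p :
  upd x q b p = if p == q then b else x p.
Proof. by rewrite /upd ffunE. Qed.

Lemma upd_at (Q : finType) (x : config Q) q b : upd x q b q = b.
Proof. by rewrite updE eqxx. Qed.

Lemma upd_id (Q : finType) (x : config Q) q : upd x q (x q) = x.
Proof. by apply/ffunP=> p; rewrite updE; case: eqP => // ->. Qed.

Lemma upd_upd (Q : finType) (x : config Q) q b b' : upd (upd x q b) q b' = upd x q b'.
Proof. by apply/ffunP=> p; rewrite !updE; case: eqP. Qed.

Lemma sum_swap (Q : finType) q (F : config Q -> 'I_2 -> C) :
  \sum_x \sum_(b < 2) F (upd x q b) (x q) = \sum_x \sum_(b < 2) F x b.
Proof.
rewrite !pair_big /=.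
pose h (p : config Q * 'I_2) := (upd p.1 q p.2, p.1 q).
have hK : involutive h.
  by case=> x b; rewrite /h /= upd_upd upd_at upd_id.
by rewrite [RHS](reindex_inj (inv_inj hK)).
Qed.


Lemma apply1_id (Q : finType) q (v : qstate C Q) : apply1 q 1%:M v = v.
Proof.
apply: functional_extensionality => x; rewrite /apply1.
rewrite (bigD1 (x q)) //= mxE eqxx mul1r upd_id big1 ?addr0 // => b /negbTE nb.
by rewrite mxE eq_sym nb mul0r.
Qed.

Lemma apply1_adj (Q : finType) q (K L : 'M[C]_2) (A B : qstate C Q) :
  \sum_x (apply1 q K A x)^* * apply1 q L B x =
  \sum_x (A x)^* * apply1 q (K^t* *m L) B x.
Proof.
pose G (y : config Q) (r : 'I_2) :=
  (K r (y q))^* * (A y)^* * \sum_(b' < 2) L r b' * B (upd y q b').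
transitivity (\sum_x \sum_(b < 2) G (upd x q b) (x q)).
  apply: eq_bigr => x _; rewrite /apply1 rmorph_sum mulr_suml; apply: eq_bigr => b _.
  rewrite /G upd_at rmorphM /=; congr (_ * _).
  by apply: eq_bigr => b' _; rewrite upd_upd.
rewrite sum_swap; apply: eq_bigr => x _.
rewrite /apply1 /G.
under eq_bigr do rewrite mulr_sumr.
rewrite mulr_sumr. under [RHS]eq_bigr do rewrite !mxE mulr_suml mulr_sumr.
rewrite [RHS]exchange_big /=; apply: eq_bigr => r _; apply: eq_bigr => b' _.
rewrite !mxE; ring.
Qed.

Lemma null_t (a c d : C) : a != 0 ->
  exists t : C, a * (1 - t * t^*) + t^* * c + t * d = 0.
Proof.
move=> a0.
pose C' := c * a^*; pose D' := d * a^*; pose G := D' - C'^*.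
pose kap := if G == 0 then 1 else G^*.
have kap0 : kap != 0.
  by rewrite /kap; case: ifP => [_|/negbT]; rewrite ?oner_eq0 ?conjC_eq0.
pose z := c * kap^* + d * kap.
pose k := kap * kap^*.
have k0 : k != 0 by rewrite /k mulf_eq0 conjC_eq0 negb_or kap0.
have kJ : k^* = k by rewrite /k rmorphM /= conjCK mulrC.
have k_ge0 : 0 <= k by apply: mul_conjC_ge0.
have zJ : (z * a^*)^* = z * a^*.
  rewrite /z /kap; case: ifP => [/eqP G0|_].
    have ED : D' = C'^* by apply/eqP; rewrite -subr_eq0 -/G G0.
    have -> : (c * 1^* + d * 1) * a^* = C' + D' by rewrite /C' /D' rmorph1; ring.
    by rewrite ED rmorphD /= conjCK addrC.
  have -> : (c * G^*^* + d * G^*) * a^* = D' * D'^* - C' * C'^*.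
    by rewrite conjCK /G /C' /D' !rmorphB !rmorphM /= !conjCK; ring.
  by rewrite rmorphB !rmorphM /= !conjCK /D' /C'; ring.
pose s := z * a^* / (a * a^*).
have sJ : s^* = s.
  by rewrite /s rmorphM fmorphV /= zJ rmorphM /= conjCK [a^* * _]mulrC.
have s_ge0 : 0 <= s ^+ 2 by rewrite expr2 -{2}sJ mul_conjC_ge0.
pose Dl := s ^+ 2 + 4%:R * k.
have Dl_ge0 : 0 <= Dl by rewrite addr_ge0 // mulr_ge0 // ler0n.
pose sq := sqrtC Dl.
have sqK : sq ^+ 2 = Dl by rewrite sqrtCK.
have sqJ : sq^* = sq by apply: geC0_conj; rewrite sqrtC_ge0.
pose rho := (s + sq) / (2%:R * k).
have rhoJ : rho^* = rho.
  by rewrite /rho rmorphM fmorphV /= rmorphD /= sJ sqJ rmorphM /= kJ rmorph_nat.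
have rho_eq : k * rho ^+ 2 - s * rho - 1 = 0.
  have h2 : (2%:R : C) != 0 by rewrite pnatr_eq0.
  have h4 : (4%:R : C) != 0 by rewrite pnatr_eq0.
  have -> : k * rho ^+ 2 - s * rho - 1 = (sq ^+ 2 - s ^+ 2 - 4%:R * k) / (4%:R * k).
    rewrite /rho; field.
    exact: k0.
  have -> : sq ^+ 2 - s ^+ 2 - 4%:R * k = 0 by rewrite sqK /Dl; ring.
  by rewrite mul0r.
exists (rho * kap).
have zs : z = s * a.
  have aJ0 : a^* != 0 by rewrite conjC_eq0.
  rewrite /s; field; by rewrite a0 aJ0.
rewrite rmorphM /= rhoJ.
have -> : a * (1 - rho * kap * (rho * kap^*)) + rho * kap^* * c + rho * kap * d
   = a * (1 - k * rho ^+ 2) + rho * z by rewrite /z /k; ring.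
rewrite zs.
have -> : a * (1 - k * rho ^+ 2) + rho * (s * a) = - a * (k * rho ^+ 2 - s * rho - 1) by ring.
by rewrite rho_eq mulr0.
Qed.

Lemma null_vec (a c d : C) : exists p q : C, p * p^* + q * q^* = 1 /\
  p * p^* * a + p * q^* * c + q * p^* * d - q * q^* * a = 0.
Proof.
have [->|a0] := eqVneq a 0.
  by exists 1, 0; rewrite rmorph1 rmorph0 !(mul0r, mulr0, mul1r, addr0, subr0).
have [t ht] := null_t c d a0.
pose Nn := 1 + t * t^*.
have Nn_gt0 : 0 < Nn by rewrite ltr_wpDr // mul_conjC_ge0.
pose r := sqrtC Nn.
have rK : r ^+ 2 = Nn by rewrite sqrtCK.
have r0 : r != 0 by rewrite sqrtC_eq0 gt_eqF.
have rJ : r^* = r by apply: geC0_conj; rewrite sqrtC_ge0 ltW.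
exists (r^-1), (t / r).
rewrite !rmorphM /= !fmorphV /= rJ; split.
  transitivity (Nn / r ^+ 2); first by rewrite /Nn; field.
  by rewrite rK divff // gt_eqF.
transitivity ((a * (1 - t * t^*) + t^* * c + t * d) / r ^+ 2); first by field.
by rewrite ht mul0r.
Qed.

Definition Mf (Q : finType) (q : Q) (A B : qstate C Q) (c b : 'I_2) :=
  \sum_x (A x)^* * ((x q == c)%:R * B (upd x q b)).

Lemma ip_apply1 (Q : finType) q (N : 'M[C]_2) (A B : qstate C Q) :
  \sum_x (A x)^* * apply1 q N B x = \sum_(c < 2) \sum_(b < 2) N c b * Mf q A B c b.
Proof.
rewrite /Mf.
under [RHS]eq_bigr do under eq_bigr do rewrite mulr_sumr.
under [RHS]eq_bigr do rewrite exchange_big /=.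
rewrite exchange_big /=; apply: eq_bigr => x _.
rewrite /apply1 mulr_sumr exchange_big /=; apply: eq_bigr => b _.
rewrite (bigD1 (x q)) //= eqxx big1 ?addr0; first by rewrite mul1r mulrCA.
by move=> c /negbTE nc; rewrite eq_sym nc mul0r !mulr0.
Qed.

Lemma Mf_tr (Q : finType) q (A B : qstate C Q) :
  Mf q A B ord0 ord0 + Mf q A B ord_max ord_max = \sum_x (A x)^* * B x.
Proof.
have := ip_apply1 q 1%:M A B; rewrite apply1_id => ->.
rewrite !big_ord_recr !big_ord0 /= !mxE /=.
have -> : widen_ord (leqnSn 1) ord_max = ord0 :> 'I_2 by apply: val_inj.
by rewrite !(mul0r, mul1r, add0r, addr0).
Qed.

Definition Enc (N m : nat) (E : 'I_N -> 'I_2 -> qstate C 'I_m) (v : qstate C 'I_N)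
  : qstate C ('I_N * 'I_m)%type :=
  fun x => \sum_(c : config 'I_N) v c * \prod_(k < N) E k (c k) (block x k).

Definition setE (N m : nat) (E : 'I_N -> 'I_2 -> qstate C 'I_m) (q : 'I_N)
  (F : 'I_2 -> qstate C 'I_m) := fun k => if k == q then F else E k.

Lemma block_upd (N m : nat) (x : config ('I_N * 'I_m)%type) q i b k :
  block (upd x (q, i) b) k = if k == q then upd (block x q) i b else block x k.
Proof.
apply/ffunP => j; rewrite /block !ffunE xpair_eqE.
by case: (eqVneq k q) => [->|kq] /=; rewrite ?updE ?ffunE.
Qed.

Lemma apply1_Enc (N m : nat) (q : 'I_N) (i : 'I_m) (K : 'M[C]_2) E v :
  apply1 (q, i) K (Enc E v) = Enc (setE E q (fun a => apply1 i K (E q a))) v.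
Proof.
apply: functional_extensionality => x; rewrite /apply1 /Enc.
under eq_bigr do rewrite mulr_sumr.
rewrite exchange_big /=; apply: eq_bigr => c _.
rewrite [in RHS](bigD1 q) //= {1}/setE eqxx mulr_suml mulr_sumr; apply: eq_bigr => b _.
rewrite (bigD1 q) //= block_upd eqxx.
have -> : \prod_(k < N | k != q) E k (c k) (block (upd x (q, i) b) k) =
          \prod_(k < N | k != q) setE E q (fun a (x0 : config 'I_m) =>
             \sum_(b < 2) K (x0 i) b * E q a (upd x0 i b)) k (c k) (block x k).
  by apply: eq_bigr => k kq; rewrite block_upd /setE (negbTE kq).
rewrite /block ffunE; ring.
Qed.

Lemma Enc_apply1 (N m : nat) (q : 'I_N) (Nm : 'M[C]_2) E (v : qstate C 'I_N) :
  Enc E (apply1 q Nm v) =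
  Enc (m := m) (setE E q (fun a z => \sum_(r < 2) Nm r a * E q r z)) v.
Proof.
apply: functional_extensionality => x; rewrite /Enc /apply1.
pose G (y : config 'I_N) (r : 'I_2) :=
  Nm r (y q) * v y * \prod_(k < N) E k (upd y q r k) (block x k).
transitivity (\sum_c \sum_(b < 2) G (upd c q b) (c q)).
  apply: eq_bigr => c _; rewrite mulr_suml; apply: eq_bigr => b _.
  by rewrite /G upd_at upd_upd upd_id.
rewrite sum_swap; apply: eq_bigr => y _.
rewrite (bigD1 q) //= {1}/setE eqxx mulr_suml mulr_sumr; apply: eq_bigr => r _.
rewrite /G (bigD1 q) //= upd_at.
have -> : \prod_(k < N | k != q) E k (upd y q r k) (block x k) =
  \prod_(k < N | k != q) setE E q (fun a z => \sum_(r0 < 2) Nm r0 a * E q r0 z) k (y k) (block x k).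
  by apply: eq_bigr => k kq; rewrite /setE updE (negbTE kq).
ring.
Qed.

Lemma sum2 (V : nmodType) (F : 'I_2 -> V) : \sum_(j < 2) F j = F ord0 + F ord_max.
Proof.
rewrite !big_ord_recr big_ord0 /= add0r; congr (F _ + _); exact: val_inj.
Qed.

Definition bv (b0 b1 : C) (c : 'I_2) := if c == ord0 then b0 else b1.

Definition kraus (b0 b1 : C) : 'M[C]_2 :=
  \matrix_(r, c) (if r == ord0 then (bv b0 b1 c)^* else 0).

Lemma krausTK b0 b1 : (kraus b0 b1)^t* *m kraus b0 b1 =
  \matrix_(c, c') (bv b0 b1 c * (bv b0 b1 c')^*).
Proof.
apply/matrixP => c c'; rewrite !mxE sum2 !mxE eqxx.
have -> : (ord_max == ord0 :> 'I_2) = false by [].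
by rewrite conjCK rmorph0 mul0r addr0.
Qed.

Lemma ord2P (c : 'I_2) : c = ord0 \/ c = ord_max.
Proof.
case: c => [[|[|//]]] h; [left|right]; exact: val_inj.
Qed.

Lemma kraus_sum (p q : C) : p * p^* + q * q^* = 1 ->
  (kraus p q)^t* *m kraus p q + (kraus (- q^*) p^*)^t* *m kraus (- q^*) p^* = 1%:M.
Proof.
move=> pq; rewrite !krausTK; apply/matrixP => c c'; rewrite !mxE /bv.
have h10 : (ord_max == ord0 :> 'I_2) = false by [].
case: (ord2P c) => ->; case: (ord2P c') => ->; rewrite ?eqxx ?h10 /=;
  rewrite ?rmorphN /= ?conjCK ?mulr1n ?mulr0n; try (rewrite -pq); ring.
Qed.

Definition colF (m : nat) (F : 'I_2 -> qstate C 'I_m) (u : 'M[C]_2) (j : 'I_2)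
  : qstate C 'I_m := fun z => \sum_(a < 2) u a j * F a z.

Definition ipq (Q : finType) (A B : qstate C Q) := \sum_x (A x)^* * B x.

Definition supp (m n : nat) (F : 'I_2 -> qstate C 'I_m) :=
  forall a (z : config 'I_m) (i : 'I_m), (i < n)%N -> z i != ord0 -> F a z = 0.

Lemma colF_apply1 (m : nat) (i : 'I_m) K F u j :
  colF (fun a => apply1 i K (F a)) u j = apply1 i K (colF F u j).
Proof.
apply: functional_extensionality => z; rewrite /colF /apply1.
under eq_bigr do rewrite mulr_sumr.
rewrite exchange_big /=; apply: eq_bigr => b _.
by rewrite mulr_sumr; apply: eq_bigr => a _; ring.
Qed.

Lemma setE_setE (N m : nat) (E : 'I_N -> 'I_2 -> qstate C 'I_m) q F G :
  setE (setE E q F) q G = setE E q G.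
Proof.
by apply: functional_extensionality => k; rewrite /setE; case: eqP.
Qed.

Lemma setE_at (N m : nat) (E : 'I_N -> 'I_2 -> qstate C 'I_m) q F : setE E q F q = F.
Proof. by rewrite /setE eqxx. Qed.

Lemma setE_id (N m : nat) (E : 'I_N -> 'I_2 -> qstate C 'I_m) q : setE E q (E q) = E.
Proof.
by apply: functional_extensionality => k; rewrite /setE; case: eqP => // ->.
Qed.

Lemma ip_kraus (Q : finType) (i : Q) b0 b1 (A B : qstate C Q) :
  ipq (apply1 i (kraus b0 b1) A) (apply1 i (kraus b0 b1) B) =
  b0 * b0^* * Mf i A B ord0 ord0 + b0 * b1^* * Mf i A B ord0 ord_max
  + b1 * b0^* * Mf i A B ord_max ord0 + b1 * b1^* * Mf i A B ord_max ord_max.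
Proof.
rewrite /ipq apply1_adj krausTK ip_apply1 !sum2 !mxE /bv eqxx.
have -> : (ord_max == ord0 :> 'I_2) = false by [].
by rewrite !addrA.
Qed.

Lemma walgate (N m : nat) (q : 'I_N) (u : 'M[C]_2)
  (E : 'I_N -> 'I_2 -> qstate C 'I_m) (v : qstate C 'I_N)
  (P : qstate C ('I_N * 'I_m)%type -> Prop) k :
  forall n, (n + k = m)%N -> forall F, supp n F ->
  ipq (colF F u ord0) (colF F u ord_max) = 0 ->
  (forall F', supp m F' -> ipq (colF F' u ord0) (colF F' u ord_max) = 0 ->
     exists t, lbranches t (Enc (setE E q F') v) P) ->
  exists t, lbranches t (Enc (setE E q F) v) P.
Proof.
elim: k => [|k IH] n nk F sF ipF cont.
  by rewrite addn0 in nk; subst n; exact: cont.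
have nm : (n < m)%N by rewrite -nk addnS ltnS leq_addr.
pose i := Ordinal nm.
pose A := colF F u ord0; pose B := colF F u ord_max.
have [p [q' [pq hQ]]] :=
  null_vec (Mf i A B ord0 ord0) (Mf i A B ord0 ord_max) (Mf i A B ord_max ord0).
have tr : Mf i A B ord_max ord_max = - Mf i A B ord0 ord0.
  by apply/eqP; rewrite -addr_eq0 addrC Mf_tr; apply/eqP.
have h10 : (ord_max == ord0 :> 'I_2) = false by [].
pose K (s : 'I_2) := if s == ord0 then kraus p q' else kraus (- q'^*) p^*.
pose Fs s := fun a => apply1 i (K s) (F a).
have hs : forall s, exists t, lbranches t (Enc (setE E q (Fs s)) v) P.
  move=> s; apply: (IH n.+1 _ (Fs s)) => //.
  - by rewrite addSnnS.
  - move=> a z i' i'n zi'; rewrite /Fs /apply1; apply: big1 => b _.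
    case: (eqVneq i' i) => [ei|ni].
      by subst i'; rewrite /K; case: ifP => _; rewrite mxE (negbTE zi') mul0r.
    have i'n' : (i' < n)%N.
      rewrite ltnS leq_eqVlt in i'n; case/orP: i'n => // /eqP e.
      by case/eqP: ni; apply: val_inj.
    by rewrite (sF a (upd z i b) i' i'n') ?mulr0 // updE (negbTE ni).
  - rewrite /Fs !colF_apply1 /K; case: ifP => _; rewrite ip_kraus -/A -/B tr.
      by rewrite -[RHS]hQ; ring.
    rewrite ?rmorphN /= ?conjCK.
    by rewrite -[RHS]oppr0 -[in RHS]hQ; ring.
have [t0 h0] := hs ord0; have [t1 h1] := hs ord_max.
exists (LOp (q, i) K (fun s => if s == ord0 then t0 else t1)); split.
  by rewrite sum2 /K eqxx h10 kraus_sum.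
move=> s; rewrite apply1_Enc setE_at setE_setE.
by case: (ord2P s) => ->; rewrite ?eqxx ?h10.
Qed.

Lemma unit_row (u : 'M[C]_2) : u \is unitarymx ->
  forall a b, \sum_(l < 2) u a l * (u b l)^* = (a == b)%:R.
Proof.
move=> /unitarymxP uu a b; have := congr1 (fun M : 'M[C]_2 => M a b) uu.
by rewrite /= !mxE => <-; apply: eq_bigr => l _; rewrite !mxE.
Qed.

Lemma unit_col (u : 'M[C]_2) : u \is unitarymx ->
  forall a b, \sum_(l < 2) (u l a)^* * u l b = (a == b)%:R.
Proof.
rewrite -trmxC_unitary => /unitarymxP uu a b.
have := congr1 (fun M : 'M[C]_2 => M a b) uu.
by rewrite /= !mxE => <-; apply: eq_bigr => l _; rewrite !mxE conjCK.
Qed.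

Lemma ip_colF (m : nat) (F : 'I_2 -> qstate C 'I_m) u j j' :
  ipq (colF F u j) (colF F u j') =
  \sum_(a < 2) \sum_(b < 2) (u a j)^* * u b j' * ipq (F a) (F b).
Proof.
rewrite /ipq /colF.
under eq_bigr do rewrite rmorph_sum mulr_suml.
rewrite exchange_big /=; apply: eq_bigr => a _.
under eq_bigr do rewrite mulr_sumr.
rewrite exchange_big /=; apply: eq_bigr => b _.
rewrite mulr_sumr; apply: eq_bigr => z _; rewrite rmorphM /=; ring.
Qed.

Lemma sum2_jj (V : nmodType) (j j' : 'I_2) (g : 'I_2 -> V) : j != j' ->
  \sum_(l < 2) g l = g j + g j'.
Proof.
rewrite sum2; case: (ord2P j) => ->; case: (ord2P j') => -> //; rewrite ?eqxx //.
by rewrite addrC.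
Qed.

Definition orth (m : nat) (F : 'I_2 -> qstate C 'I_m) (lam : C) :=
  forall a b, ipq (F a) (F b) = lam * (a == b)%:R.

Lemma sum_delta (I : finType) (a : I) (g : I -> C) :
  \sum_b g b * (a == b)%:R = g a.
Proof.
rewrite (bigD1 a) //= eqxx mulr1 big1 ?addr0 // => b /negbTE nb.
by rewrite eq_sym nb mulr0.
Qed.

Lemma ip_colF_orth (m : nat) (F : 'I_2 -> qstate C 'I_m) lam u j j' :
  orth F lam -> u \is unitarymx ->
  ipq (colF F u j) (colF F u j') = lam * (j == j')%:R.
Proof.
move=> oF uU; rewrite ip_colF.
under eq_bigr do under eq_bigr do rewrite oF mulrA.
under eq_bigr do rewrite sum_delta.
by rewrite -(unit_col uU) mulr_sumr; apply: eq_bigr => a _; ring.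
Qed.

Lemma F_decomp (m : nat) (F : 'I_2 -> qstate C 'I_m) u a z : u \is unitarymx ->
  F a z = \sum_(l < 2) (u a l)^* * colF F u l z.
Proof.
move=> uU; rewrite /colF.
under eq_bigr do rewrite mulr_sumr.
rewrite exchange_big /=.
transitivity (\sum_(b < 2) F b z * (a == b)%:R); first by rewrite sum_delta.
apply: eq_bigr => b _; rewrite eq_sym -(unit_row uU) mulr_sumr.
by apply: eq_bigr => l _; ring.
Qed.

Lemma logmeas (N m : nat) (q : 'I_N) (u : 'M[C]_2) E v
  (P : qstate C ('I_N * 'I_m)%type -> Prop) lam :
  (0 < m)%N -> u \is unitarymx -> orth (E q) lam ->
  (forall j F'', (exists lam', orth F'' lam') ->
     exists t, lbranches t (Enc (setE E q F'') (apply1 q (proj_col u j) v)) P) ->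
  exists t, lbranches t (Enc E v) P.
Proof.
move=> m0 uU oE cont.
have h10 : (ord0 == ord_max :> 'I_2) = false by [].
rewrite -(setE_id E q).
apply: (walgate (u := u) (k := m) (n := 0)) => //.
- by rewrite (ip_colF_orth _ _ oE uU) h10 mulr0.
move=> F' sF' ipF'.
pose z0 : config 'I_m := [ffun _ => ord0].
have Fz : forall a z, z != z0 -> F' a z = 0.
  move=> a z nz; case: (pickP (fun i => z i != ord0)) => [i zi|H].
    exact: (sF' a z i (ltn_ord i) zi).
  case/negP: nz; apply/eqP/ffunP => i; rewrite ffunE.
  by have := H i => /= /negbFE /eqP.
have colz : forall j z, z != z0 -> colF F' u j z = 0.
  by move=> j z nz; rewrite /colF big1 // => a _; rewrite Fz ?mulr0.
have ip0 : (colF F' u ord0 z0)^* * colF F' u ord_max z0 = 0.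
  rewrite -ipF' /ipq (bigD1 z0) //= big1 ?addr0 // => z nz.
  by rewrite (colz ord_max) ?mulr0.
have [j [j' [jj' hj']]] : exists j j' : 'I_2, j != j' /\ forall z, colF F' u j' z = 0.
  move/eqP: ip0; rewrite mulf_eq0 conjC_eq0 => /orP[]/eqP h.
    exists ord_max, ord0; split => // z.
    by case: (eqVneq z z0) => [->|nz]; [exact: h | exact: colz].
  exists ord0, ord_max; split => // z.
  by case: (eqVneq z z0) => [->|nz]; [exact: h | exact: colz].
pose w := colF F' u j.
pose g := w z0.
pose i0 : 'I_m := Ordinal m0.
pose z1 : config 'I_m := [ffun i => if i == i0 then ord_max else ord0].
have z10 : z0 != z1 by apply/eqP => /ffunP /(_ i0); rewrite !ffunE eqxx.
pose F'' := fun a (z : config 'I_m) =>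
  (u a j)^* * g * (z == z0)%:R + (u a j')^* * g * (z == z1)%:R.
have oF'' : exists lam', orth F'' lam'.
  exists (g^* * g) => a b; rewrite /ipq /F''.
  transitivity (\sum_z ((u a j * g^* * ((u b j)^* * g)) * (z0 == z)%:R
                 + (u a j' * g^* * ((u b j')^* * g)) * (z1 == z)%:R)).
    apply: eq_bigr => z _; rewrite !rmorphD !rmorphM /= !rmorph_nat !conjCK.
    have [<-|n0] := eqVneq z0 z.
      by rewrite [z1 == z0]eq_sym (negbTE z10) /= ?mulr1n ?mulr0n; ring.
    case: (eqVneq z1 z) => [e|n1].
      by rewrite -e in n0 *; rewrite /= ?mulr1n ?mulr0n; ring.
    by rewrite /= ?mulr1n ?mulr0n; ring.
  rewrite big_split /= !sum_delta -(unit_row uU) (sum2_jj _ jj'); ring.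
have [t ht] := cont j F'' oF''.
exists t; move: ht.
suff -> : Enc (setE E q F') v = Enc (setE E q F'') (apply1 q (proj_col u j) v) by [].
rewrite Enc_apply1 setE_setE setE_at; congr Enc; congr setE.
apply: functional_extensionality => a; apply: functional_extensionality => z.
rewrite (F_decomp F' a z uU) (sum2_jj _ jj') hj' mulr0 addr0.
transitivity ((u a j)^* * (g * (z == z0)%:R)).
  have [->|nz] := eqVneq z z0; rewrite /= ?mulr1n ?mulr0n ?mulr1 ?mulr0 //.
  by rewrite colz ?mulr0.
transitivity (\sum_(r < 2) (u a j)^* * g * (((u r j)^* * u r j) * (z == z0)%:R
               + ((u r j')^* * u r j) * (z == z1)%:R)).
  rewrite -mulr_sumr big_split /= -!mulr_suml !unit_col // eqxx [j' == j]eq_sym.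
  by rewrite (negbTE jj') /= ?mulr1n ?mulr0n; ring.
apply: eq_bigr => r _; rewrite /F'' mxE; ring.
Qed.

Section Merge.
Variables (n N : nat) (f : 'I_n -> 'I_N).
Hypothesis finj : injective f.

Definition restr (c : config 'I_N) : config 'I_n := [ffun l => c (f l)].
Definition merge (d : config 'I_n) (c : config 'I_N) : config 'I_N :=
  [ffun k => if [pick l | f l == k] is Some l then d l else c k].

Lemma pick_f l : [pick l' | f l' == f l] = Some l.
Proof.
case: pickP => [l' /eqP /finj -> //|H].
by have := H l; rewrite eqxx.
Qed.

Lemma restr_merge d c : restr (merge d c) = d.
Proof. by apply/ffunP => l; rewrite !ffunE pick_f. Qed.

Lemma merge_restr c : merge (restr c) c = c.
Proof.
apply/ffunP => k; rewrite !ffunE; case: pickP => [l /eqP <-|_] //.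
by rewrite ffunE.
Qed.

Lemma merge_merge d d' c : merge d (merge d' c) = merge d c.
Proof. by apply/ffunP => k; rewrite !ffunE; case: pickP. Qed.

Lemma merge_out d c k : (forall l, f l != k) -> merge d c k = c k.
Proof.
move=> H; rewrite ffunE; case: pickP => // l /eqP e.
by have := H l; rewrite e eqxx.
Qed.

Lemma sum_restr (A : config 'I_N -> C) (B : config 'I_n -> C) :
  (forall d c, A (merge d c) = A c) ->
  \sum_c A c * B (restr c) =
  (\sum_(c | restr c == [ffun => ord0]) A c) * \sum_d B d.
Proof.
move=> AM.
rewrite (partition_big restr predT) //= mulr_sumr; apply: eq_bigr => d _.
have -> : \sum_(c | restr c == d) A c * B (restr c) = (\sum_(c | restr c == d) A c) * B d.
  by rewrite mulr_suml; apply: eq_bigr => c /eqP ->.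
congr (_ * _).
rewrite (reindex_onto (merge d) (merge [ffun => ord0])); last first.
  by move=> c /eqP <-; rewrite merge_merge merge_restr.
apply: eq_big => [c|c _]; last exact: AM.
rewrite restr_merge eqxx /= merge_merge.
apply/eqP/eqP => [<-|e]; first by rewrite restr_merge.
by rewrite -e merge_restr.
Qed.

End Merge.

Lemma factor (N m n : nat) (f : 'I_n -> 'I_N) (e : 'I_2 -> qstate C 'I_m)
  (E : 'I_N -> 'I_2 -> qstate C 'I_m) (v chi : qstate C 'I_N) (w0 : qstate C 'I_n) :
  injective f -> (forall l, E (f l) = e) ->
  (forall x x' : config 'I_N, (forall q, (forall k, f k != q) -> x q = x' q) -> chi x = chi x') ->
  (forall c, v c = chi c * w0 (restr f c)) ->
  holds_on (fun p : 'I_n * 'I_m => (f p.1, p.2)) (Enc E v) (encode e w0).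
Proof.
move=> finj Ef chiI vE.
pose img := f @: [set: 'I_n].
have nimg : forall k, k \notin img -> forall l, f l != k.
  move=> k kn l; apply/eqP => e1; move: kn; rewrite -e1 imset_f //.
pose H (x : config ('I_N * 'I_m)%type) c :=
  \prod_(k < N | k \notin img) E k (c k) (block x k).
exists (fun x => \sum_(c | restr f c == [ffun => ord0]) chi c * H x c); split.
  move=> x x' hx; apply: eq_bigr => c _; congr (_ * _); apply: eq_bigr => k kn.
  have -> : block x k = block x' k.
    apply/ffunP => j; rewrite !ffunE; apply: hx => -[l j'] /=.
    by apply/negP => /eqP [e1 _]; move: (nimg k kn l); rewrite e1 eqxx.
  by [].
move=> x; rewrite /Enc /encode.
pose y : config ('I_n * 'I_m)%type := [ffun p => x (f p.1, p.2)].
have step : forall c, v c * \prod_k E k (c k) (block x k) =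
    (chi c * H x c) * (w0 (restr f c) * \prod_l e (restr f c l) (block y l)).
  move=> c; rewrite vE (bigID (fun k => k \in img)) /=.
  rewrite (big_imset _ (in2W finj)) /=.
  have -> : \prod_(l in [set: 'I_n]) E (f l) (c (f l)) (block x (f l)) =
            \prod_l e (restr f c l) (block y l).
    apply: eq_big => [l|l _]; first by rewrite inE.
    rewrite Ef /restr ffunE; congr (e _ _); apply/ffunP => j; rewrite !ffunE //.
  rewrite /H; ring.
under eq_bigr do rewrite step.
rewrite (@sum_restr _ _ f finj (fun c => chi c * H x c)
   (fun d => w0 d * \prod_l e (d l) (block y l))) //.
move=> d c; congr (_ * _).
  by apply: chiI => k hk; rewrite merge_out.
apply: eq_bigr => k kn; rewrite merge_out //; exact: nimg.
Qed.

Lemma sum_blocks (n m : nat) (G : 'I_n -> config 'I_m -> C) :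
  \sum_(y : config ('I_n * 'I_m)%type) \prod_(k < n) G k (block y k) =
  \prod_(k < n) \sum_(z : config 'I_m) G k z.
Proof.
rewrite bigA_distr_bigA /=.
rewrite (reindex (fun F : {ffun 'I_n -> config 'I_m} =>
            [ffun p : 'I_n * 'I_m => F p.1 p.2] : config ('I_n * 'I_m)%type)).
  apply: eq_bigr => F _; apply: eq_bigr => k _; congr (G k _).
  by apply/ffunP => j; rewrite !ffunE.
exists (fun y : config ('I_n * 'I_m)%type => [ffun k => block y k]) => [F _|y _].
  by apply/ffunP => k; apply/ffunP => j; rewrite !ffunE.
by apply/ffunP => -[k j]; rewrite !ffunE.
Qed.

Lemma enc_tensor (m n : nat) (e : 'I_2 -> qstate C 'I_m) (U : 'I_n -> 'M[C]_2)
  (phi : qstate C 'I_n) : orthonormal_pair e ->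
  encode e (tensor_apply U phi) = logical_apply e U (encode e phi).
Proof.
move=> oe; apply: functional_extensionality => y.
rewrite /encode /logical_apply /tensor_apply.
transitivity (\sum_c' phi c' * \prod_(k < n)
   \sum_(a < 2) U k a (c' k) * e a (block y k)).
  under eq_bigr do rewrite mulr_suml.
  rewrite exchange_big /=; apply: eq_bigr => c' _.
  rewrite bigA_distr_bigA /= mulr_sumr; apply: eq_bigr => c _.
  rewrite big_split /= ; ring.
symmetry.
under eq_bigr do rewrite mulr_sumr.
rewrite exchange_big /=; apply: eq_bigr => c' _.
transitivity (phi c' * \sum_(y' : config ('I_n * 'I_m)%type) \prod_(k < n)
   (logical_op e (U k) (block y k) (block y' k) * e (c' k) (block y' k))).
  rewrite mulr_sumr; apply: eq_bigr => y' _; rewrite big_split /=; ring.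
rewrite (sum_blocks (fun k z => logical_op e (U k) (block y k) z * e (c' k) z)); congr (_ * _); apply: eq_bigr => k _.
rewrite /logical_op.
transitivity (\sum_z \sum_(a < 2) \sum_(b < 2)
   U k a b * e a (block y k) * ((e b z)^* * e (c' k) z)).
  apply: eq_bigr => z _; rewrite mulr_suml; apply: eq_bigr => a _.
  by rewrite mulr_suml; apply: eq_bigr => b _; ring.
rewrite exchange_big /=; apply: eq_bigr => a _.
rewrite exchange_big /=.
transitivity (\sum_(b < 2) U k a b * e a (block y k) * (b == c' k)%:R).
  apply: eq_bigr => b _; rewrite -(oe b (c' k)) mulr_sumr.
  by apply: eq_bigr => z _; ring.
by rewrite (bigD1 (c' k)) //= eqxx mulr1 big1 ?addr0 // => b /negbTE ->; rewrite mulr0.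
Qed.

Lemma m_pos (m : nat) (e : 'I_2 -> qstate C 'I_m) : orthonormal_pair e -> (0 < m)%N.
Proof.
case: m e => [|m] e oe //; exfalso.
pose z0 : config 'I_0 := [ffun i => ord0].
have uz : forall z : config 'I_0, z = z0 by move=> z; apply/ffunP => -[].
have s1 : forall g : config 'I_0 -> C, \sum_z g z = g z0.
  move=> g; rewrite (bigD1 z0) //= big1 ?addr0 // => z; by rewrite (uz z) eqxx.
have := oe ord0 ord_max; have := oe ord0 ord0; rewrite !s1 eqxx.
have -> : (ord0 == ord_max :> 'I_2) = false by [].
move=> h00 /eqP; rewrite mulf_eq0 conjC_eq0 => /orP[]/eqP h.
  by move: h00; rewrite h rmorph0 mul0r => /eqP; rewrite eq_sym oner_eq0.
have := oe ord_max ord_max; rewrite s1 eqxx h mulr0 => /eqP.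
by rewrite eq_sym oner_eq0.
Qed.

Lemma Enc_nonzero (N m : nat) (E : 'I_N -> 'I_2 -> qstate C 'I_m) v :
  nonzero (Enc E v) -> nonzero v.
Proof.
case=> x; rewrite /Enc => nz.
case: (pickP (fun c => v c != 0)) => [c vc|H]; first by exists c.
by move: nz; rewrite big1 ?eqxx // => c _; have := H c => /negbFE /eqP ->; rewrite mul0r.
Qed.

Section Sim.
Variables (N m n : nat) (f : 'I_n -> 'I_N) (e : 'I_2 -> qstate C 'I_m)
  (phi : qstate C 'I_n).
Hypothesis finj : injective f.
Hypothesis oe : orthonormal_pair e.

Definition Pf (v : qstate C 'I_N) (meas : seq 'I_N) :=
  (forall q, q \in meas -> forall k, f k != q) /\
  (forall q, (forall k, f k != q) -> q \in meas) /\
  (nonzero v -> exists U : 'I_n -> 'M[C]_2,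
     (forall k, U k \is unitarymx) /\ holds_on f v (tensor_apply U phi)).

Definition Pg (V : qstate C ('I_N * 'I_m)%type) :=
  nonzero V -> exists U : 'I_n -> 'M[C]_2,
    (forall k, U k \is unitarymx) /\
    holds_on (fun p : 'I_n * 'I_m => (f p.1, p.2)) V
             (logical_apply e U (encode e phi)).

Lemma sim (t : ptree C 'I_N) : forall v meas E,
  (forall k, exists lam, orth (E k) lam) ->
  (forall k, k \notin meas -> E k = e) ->
  pbranches t v meas Pf -> exists lt, lbranches lt (Enc E v) Pg.
Proof.
elim: t => [|q u ch IH] v meas E oE Ee /=.
  move=> [H1 [H2 H3]]; exists (LLeaf _ _) => /= /Enc_nonzero /H3 [U [uU [chi [chiI vE]]]].
  exists U; split => //; rewrite -enc_tensor //.
  apply: (factor (chi := chi)) => //.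
  move=> l; apply: Ee; apply/negP => /H1 /(_ l); by rewrite eqxx.
move=> [uU Hch].
have [lam oq] := oE q.
apply: (logmeas (u := u) (lam := lam)) => //; first exact: m_pos oe.
move=> j F'' [lam' oF''].
apply: (IH j _ (q :: meas)) => //.
  by move=> k; rewrite /setE; case: eqP => _ //; exists lam'.
move=> k; rewrite inE negb_or => /andP [kq km].
by rewrite /setE (negbTE kq) Ee.
Qed.

End Sim.

End Aux.

Theorem theorem16 (R : realType) (I : Type) (N : I -> nat)
    (psi : forall i : I, qstate R[i] 'I_(N i)) :
  (forall i, normalized (psi i)) ->
  universal_proj psi ->
  forall (m : nat) (e : 'I_2 -> qstate R[i] 'I_m),
    orthonormal_pair e ->
    enc_universal_locc e psi.
Proof.
move=> _ Hu m e oe n phi nphi.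
have [i [f [finj [t ht]]]] := Hu n phi nphi.
exists i, f; split => //.
have oE : forall k : 'I_(N i), exists lam, orth e lam.
  by move=> k; exists 1 => a b; rewrite mul1r; exact: oe.
have [lt hlt] := @sim _ (N i) m n f e phi finj oe t (psi i) [::] (fun _ => e)
  oE (fun _ _ => erefl) ht.
by exists lt.
Qed.
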